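(* For real $\alpha\ne0$ and real $\beta$, let $F_{\alpha,\beta}(x)=\bigl(1+\frac{\alpha}{x}\bigr)^{x+\beta}$. Then: (1) For $\alpha>0$: $\bigl(1+\frac{\alpha}{x}\bigr)^{x+\beta}-e^{\alpha}\in\mathcal{C}[(0,\infty)]$ if and only if $\alpha\le2\beta$; and $\bigl(1+\frac{\alpha}{x}\bigr)^{-(x+\beta)}-e^{-\alpha}\in\mathcal{C}[(0,\infty)]$ if and only if $\beta\le0$. (2) For $\alpha<0$: $\bigl(1+\frac{\alpha}{x}\bigr)^{x+\beta}-e^{\alpha}\in\mathcal{C}[(-\alpha,\infty)]$ if and only if $\beta\le\alpha$; and $\frac{1}{F_{\alpha,\beta}(x)}\in\mathcal{C}[(-\alpha,\infty)]$ if and only if $2\beta\ge\alpha$.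
   Context: A function $f$ is completely monotonic on an interval $I$ if it has derivatives of all orders on $I$ and $(-1)^k f^{(k)}(x)\ge0$ for all $x\in I$ and all integers $k\ge0$; the set of such functions is denoted $\mathcal{C}[I]$. *)

(* Defs.v *)
From Stdlib Require Import Reals.
From Coquelicot Require Import Coquelicot.
Open Scope R_scope.

Definition completely_monotonic (f : R -> R) (I : R -> Prop) : Prop :=
  forall (k : nat) (x : R), I x ->
    ex_derive_n f k x /\ 0 <= (-1) ^ k * Derive_n f k x.

Definition F (alpha beta x : R) : R := Rpower (1 + alpha / x) (x + beta).

(* Main.v *)
Require Import Defs.
From Stdlib Require Import Reals.
From Coquelicot Require Import Coquelicot.
From Stdlib Require Import Lra Lia Factorial.
Open Scope R_scope.


Lemma loc_gt (a x : R) : a < x -> locally x (fun u => a < u).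
Proof. intros H. exact (open_gt a x H). Qed.

Definition CMn (f : R -> R) (a : R) (n : nat) : Prop :=
  forall k x, (k <= n)%nat -> a < x -> ex_derive_n f k x /\ 0 <= (-1) ^ k * Derive_n f k x.

Lemma Derive_n_Derive (f : R -> R) (k : nat) (x : R) :
  Derive_n (Derive f) k x = Derive_n f (S k) x.
Proof.
  revert x; induction k; intros x; [reflexivity|].
  simpl. apply Derive_ext. intros t. apply IHk.
Qed.

Lemma ex_derive_n_Derive (f : R -> R) (k : nat) (x : R) :
  ex_derive f x -> ex_derive_n (Derive f) k x -> ex_derive_n f (S k) x.
Proof.
  destruct k; simpl; intros H1 H2; [exact H1|].
  eapply ex_derive_ext; [|exact H2]. intros t. apply Derive_n_Derive.
Qed.

Lemma ex_derive_n_Derive' (f : R -> R) (k : nat) (x : R) :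
  ex_derive_n f (S k) x -> ex_derive_n (Derive f) k x.
Proof.
  destruct k; simpl; intros H1; [exact I|].
  eapply ex_derive_ext; [|exact H1]. intros t. symmetry. apply Derive_n_Derive.
Qed.

Lemma CMn_ext (f g : R -> R) a n : (forall x, a < x -> f x = g x) -> CMn f a n -> CMn g a n.
Proof.
  intros E H k x Hk Hx. destruct (H k x Hk Hx) as [H1 H2].
  assert (L : locally x (fun t => f t = g t)).
  { eapply filter_imp; [|exact (loc_gt a x Hx)]. intros; auto. }
  split.
  - eapply ex_derive_n_ext_loc; eauto.
  - rewrite <- (Derive_n_ext_loc f g k x L). exact H2.
Qed.

Lemma CMn_succ (f : R -> R) a n :
  (forall x, a < x -> ex_derive f x) ->
  (forall x, a < x -> 0 <= f x) ->
  CMn (fun x => - Derive f x) a n -> CMn f a (S n).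
Proof.
  intros D P H k x Hk Hx. destruct k.
  - split; [exact I|]. simpl. rewrite Rmult_1_l. auto.
  - assert (Hk' : (k <= n)%nat) by lia.
    destruct (H k x Hk' Hx) as [H1 H2]. split.
    + apply ex_derive_n_Derive; auto.
      apply ex_derive_n_ext with (fun x => - - Derive f x); [intros; ring|].
      apply ex_derive_n_opp. exact H1.
    + rewrite Derive_n_opp, Derive_n_Derive in H2. simpl pow. lra.
Qed.

Lemma CMn_pred (f : R -> R) a n : CMn f a (S n) ->
  (forall x, a < x -> ex_derive f x) /\ (forall x, a < x -> 0 <= f x) /\
  CMn (fun x => - Derive f x) a n.
Proof.
  intros H. split; [|split].
  - intros x Hx. exact (proj1 (H 1%nat x ltac:(lia) Hx)).
  - intros x Hx. pose proof (proj2 (H 0%nat x ltac:(lia) Hx)). simpl in H0. lra.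
  - intros k x Hk Hx. destruct (H (S k) x ltac:(lia) Hx) as [H1 H2]. split.
    + apply ex_derive_n_opp. apply ex_derive_n_Derive'. exact H1.
    + rewrite Derive_n_opp, Derive_n_Derive. simpl pow in H2. lra.
Qed.

Lemma CMn_le f a n m : (m <= n)%nat -> CMn f a n -> CMn f a m.
Proof. intros Hm H k x Hk Hx. apply H; auto; lia. Qed.

Lemma CMn_ex_loc f a n x : CMn f a n -> a < x ->
  locally x (fun y => forall k, (k <= n)%nat -> ex_derive_n f k y).
Proof.
  intros H Hx. eapply filter_imp; [|exact (loc_gt a x Hx)].
  intros y Hy k Hk. exact (proj1 (H k y Hk Hy)).
Qed.

Lemma CMn_plus f g a n : CMn f a n -> CMn g a n -> CMn (fun x => f x + g x) a n.
Proof.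
  intros Hf Hg k x Hk Hx.
  assert (Lf := CMn_ex_loc f a k x (CMn_le f a n k Hk Hf) Hx).
  assert (Lg := CMn_ex_loc g a k x (CMn_le g a n k Hk Hg) Hx).
  split.
  - apply ex_derive_n_plus; auto.
  - rewrite Derive_n_plus; auto. rewrite Rmult_plus_distr_l.
    apply Rplus_le_le_0_compat; [apply (Hf k x Hk Hx)|apply (Hg k x Hk Hx)].
Qed.

Lemma CMn_mult n : forall f g a, CMn f a n -> CMn g a n -> CMn (fun x => f x * g x) a n.
Proof.
  induction n; intros f g a Hf Hg.
  - intros k x Hk Hx. assert (k = 0%nat) by lia. subst. split; [exact I|]. simpl.
    rewrite Rmult_1_l. apply Rmult_le_pos.
    + pose proof (proj2 (Hf 0%nat x Hk Hx)). simpl in H. lra.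
    + pose proof (proj2 (Hg 0%nat x Hk Hx)). simpl in H. lra.
  - destruct (CMn_pred f a n Hf) as [Df [Pf Cf]].
    destruct (CMn_pred g a n Hg) as [Dg [Pg Cg]].
    apply CMn_succ.
    + intros x Hx. apply ex_derive_mult; auto.
    + intros x Hx. apply Rmult_le_pos; auto.
    + apply CMn_ext with (fun x => (- Derive f x) * g x + f x * (- Derive g x)).
      * intros x Hx. rewrite Derive_mult; auto. ring.
      * apply CMn_plus; apply IHn; auto; apply CMn_le with (S n); auto.
Qed.

Lemma CMn_exp (h psi : R -> R) a :
  (forall x, a < x -> is_derive h x (- psi x)) ->
  (forall n, CMn psi a n) ->
  forall n, CMn (fun y => exp (h y)) a n.
Proof.
  intros Dh Cpsi. induction n.
  - intros k x Hk Hx. assert (k = 0%nat) by lia. subst. split; [exact I|]. simpl.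
    rewrite Rmult_1_l. left. apply exp_pos.
  - apply CMn_succ.
    + intros x Hx. eexists. apply (is_derive_comp exp h). apply is_derive_exp. apply Dh; auto.
    + intros x Hx. left. apply exp_pos.
    + apply CMn_ext with (fun x => psi x * exp (h x)).
      * intros x Hx. erewrite is_derive_unique.
        2:{ apply (is_derive_comp exp h). apply is_derive_exp. apply Dh; auto. }
        unfold scal; simpl; unfold mult; simpl. ring.
      * apply CMn_mult; auto.
Qed.

Lemma Dinv (c : R) (n : nat) : forall x, 0 < x + c ->
  ex_derive_n (fun y => / (y + c)) n x /\
  Derive_n (fun y => / (y + c)) n x = (-1) ^ n * INR (fact n) / (x + c) ^ (S n).
Proof.
  induction n; intros x Hx.
  - split; [exact I|]. simpl. field. lra.
  - assert (L : locally x (fun y => Derive_n (fun y => / (y + c)) n y =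
                                   (-1) ^ n * INR (fact n) / (y + c) ^ (S n))).
    { eapply filter_imp; [|exact (loc_gt (-c) x ltac:(lra))]. intros y Hy.
      apply IHn. lra. }
    assert (D : is_derive (fun y => (-1) ^ n * INR (fact n) / (y + c) ^ (S n)) x
                  ((-1) ^ (S n) * INR (fact (S n)) / (x + c) ^ (S (S n)))).
    { auto_derive.
      - apply Rmult_integral_contrapositive_currified; [lra|apply pow_nonzero; lra].
      - change (match n with 0%nat => 1 | S _ => INR n + 1 end) with (INR (S n)).
        rewrite fact_simpl, mult_INR. simpl pow.
        field. split; [apply pow_nonzero; lra| lra]. }
    split.
    + simpl. eapply ex_derive_ext_loc.
      * eapply filter_imp; [|exact L]. intros y Hy. symmetry. exact Hy.
      * eexists. exact D.
    + simpl Derive_n. rewrite (Derive_ext_loc _ _ x L). apply is_derive_unique. exact D.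
Qed.

Lemma Dln (c : R) (n : nat) (x : R) : 0 < x + c ->
  ex_derive_n (fun y => ln (y + c)) (S n) x /\
  Derive_n (fun y => ln (y + c)) (S n) x = (-1) ^ n * INR (fact n) / (x + c) ^ (S n).
Proof.
  intros Hx.
  assert (L : forall x, 0 < x + c -> locally x (fun y => Derive (fun y => ln (y + c)) y = / (y + c))).
  { intros z Hz. eapply filter_imp; [|exact (loc_gt (-c) z ltac:(lra))]. intros y Hy.
    apply is_derive_unique. auto_derive; [lra|]. field. lra. }
  rewrite <- Derive_n_Derive. rewrite (Derive_n_ext_loc _ _ n x (L x Hx)).
  split; [|apply Dinv; auto].
  apply ex_derive_n_Derive.
  - eexists. apply (is_derive_comp ln (fun y => y + c)).
    + apply is_derive_ln. lra.
    + apply @is_derive_plus; [apply @is_derive_id|apply @is_derive_const].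
  - eapply ex_derive_n_ext_loc.
    + eapply filter_imp; [|exact (L x Hx)]. intros y Hy. symmetry. exact Hy.
    + apply Dinv. auto.
Qed.

Fixpoint Sg (p q : R) (n : nat) : R :=
  match n with O => 0 | S k => q ^ k + p * Sg p q k end.

Lemma Sg_diff p q n : (q - p) * Sg p q n = q ^ n - p ^ n.
Proof. induction n; simpl; [ring|]. rewrite Rmult_plus_distr_l.
  replace ((q - p) * (p * Sg p q n)) with (p * ((q - p) * Sg p q n)) by ring.
  rewrite IHn. ring. Qed.

Lemma Sg_sym p q n : Sg p q (S n) = p ^ n + q * Sg p q n.
Proof. induction n; [simpl; ring|]. change (Sg p q (S (S n))) with (q ^ (S n) + p * Sg p q (S n)).
  rewrite IHn at 1. simpl. ring. Qed.

Lemma Sg_pos p q n : 0 < p -> 0 < q -> 0 <= Sg p q n.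
Proof. intros. induction n; simpl; [lra|].
  apply Rplus_le_le_0_compat; [apply pow_le; lra| apply Rmult_le_pos; lra]. Qed.

Lemma pow_mono_diff p q n : 0 < p -> 0 < q -> 0 <= (p ^ n - q ^ n) * (p - q).
Proof. intros. destruct (Rle_lt_dec p q).
  - assert (p ^ n <= q ^ n) by (apply pow_incr; lra). nra.
  - assert (q ^ n <= p ^ n) by (apply pow_incr; lra). nra. Qed.

Lemma Sg_AM p q n : 0 < p -> 0 < q -> 2 * p * q * Sg p q n <= INR n * (q ^ (S n) + p ^ (S n)).
Proof.
  intros Hp Hq. induction n.
  - simpl. lra.
  - assert (E : 2 * Sg p q (S n) = (p + q) * Sg p q n + (p ^ n + q ^ n)).
    { pose proof (Sg_sym p q n) as E1. change (Sg p q (S n)) with (q ^ n + p * Sg p q n) in E1 at 1. 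
      change (Sg p q (S n)) with (q ^ n + p * Sg p q n). lra. }
    assert (M := pow_mono_diff p q (S n) Hp Hq).
    assert (HS := Sg_pos p q n Hp Hq).
    rewrite S_INR.
    replace (2 * p * q * Sg p q (S n)) with (p * q * (2 * Sg p q (S n))) by ring.
    rewrite E.
    assert (K : (p + q) * (2 * p * q * Sg p q n) <= (p + q) * (INR n * (q ^ S n + p ^ S n))).
    { apply Rmult_le_compat_l; lra. }
    assert (Hn : 0 <= INR n) by apply pos_INR.
    simpl pow in *. nra.
Qed.

Lemma Sg_min p q m n : 0 < m -> m <= p -> m <= q -> INR n * m ^ (S n) <= p * q * Sg p q n.
Proof.
  intros Hm Hp Hq. induction n.
  - simpl. lra.
  - assert (E : p * q * Sg p q (S n) = p * (p * q * Sg p q n) + p * q * q ^ n) by (simpl; ring).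
    rewrite E, S_INR.
    assert (H1 : m ^ n <= q ^ n) by (apply pow_incr; lra).
    assert (H0 : 0 <= m ^ n) by (apply pow_le; lra).
    assert (Hn : 0 <= INR n) by apply pos_INR.
    assert (H2 : p * (INR n * m ^ S n) <= p * (p * q * Sg p q n)) by (apply Rmult_le_compat_l; lra).
    assert (H3 : m * (INR n * m ^ S n) <= p * (INR n * m ^ S n)).
    { apply Rmult_le_compat_r; auto. apply Rmult_le_pos; auto. simpl; nra. }
    assert (H4 : m * m * m ^ n <= p * q * q ^ n).
    { apply Rmult_le_compat; try nra. }
    simpl pow in *. nra.
Qed.

Definition Rn (p q b : R) (n : nat) : R :=
  INR n * b * q ^ (S n) + INR n * (q - p - b) * p ^ (S n) - p * q ^ (S n) + q * p ^ (S n).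
Definition Bn (p q b : R) (n : nat) : R :=
  INR n * b * Sg p q (S n) + INR n * p ^ (S n) - p * q * Sg p q n.

Lemma Rn_Bn p q b n : Rn p q b n = (q - p) * Bn p q b n.
Proof.
  unfold Rn, Bn.
  assert (E1 := Sg_diff p q (S n)). assert (E2 := Sg_diff p q n).
  replace ((q - p) * (INR n * b * Sg p q (S n) + INR n * p ^ S n - p * q * Sg p q n))
    with (INR n * b * ((q - p) * Sg p q (S n)) + (q-p) * INR n * p ^ S n - p * q * ((q - p) * Sg p q n)) by ring.
  rewrite E1, E2. simpl. ring.
Qed.

Lemma Bn_ge p q b n : 0 < p -> 0 < q -> (q - p) / 2 <= b -> 0 <= Bn p q b n.
Proof.
  intros Hp Hq Hb. unfold Bn.
  assert (A := Sg_AM p q n Hp Hq). assert (HS := Sg_pos p q (S n) Hp Hq).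
  assert (E1 := Sg_diff p q (S n)). assert (Hn : 0 <= INR n) by apply pos_INR.
  assert (K : INR n * ((q - p) / 2) * Sg p q (S n) <= INR n * b * Sg p q (S n)).
  { apply Rmult_le_compat_r; auto. apply Rmult_le_compat_l; auto. }
  assert (K2 : INR n * ((q - p) / 2) * Sg p q (S n) = INR n * (q ^ S n - p ^ S n) / 2).
  { rewrite <- E1. field. }
  lra.
Qed.

Lemma Bn_le p q b n : 0 < p -> 0 < q -> b <= 0 -> b <= q - p -> Bn p q b n <= 0.
Proof.
  intros Hp Hq Hb1 Hb2. unfold Bn.
  assert (HS := Sg_pos p q (S n) Hp Hq).
  assert (E1 := Sg_diff p q (S n)). assert (Hn : 0 <= INR n) by apply pos_INR.
  destruct (Rle_lt_dec p q).
  - assert (M := Sg_min p q p n Hp ltac:(lra) r).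
    assert (K : INR n * b * Sg p q (S n) <= 0).
    { assert (0 <= INR n * Sg p q (S n)) by (apply Rmult_le_pos; auto). nra. }
    lra.
  - assert (M := Sg_min p q q n Hq ltac:(lra) ltac:(lra)).
    assert (K : INR n * b * Sg p q (S n) <= INR n * (q - p) * Sg p q (S n)).
    { assert (0 <= INR n * Sg p q (S n)) by (apply Rmult_le_pos; auto). nra. }
    assert (K2 : INR n * (q - p) * Sg p q (S n) = INR n * (q ^ S n - p ^ S n)).
    { rewrite <- E1. ring. }
    lra.
Qed.

Definition phi (a b y : R) : R :=
  ln (y + 0) - ln (y + a) + b * / (y + 0) + (a - b) * / (y + a).

Lemma exln c k x : 0 < x + c -> ex_derive_n (fun y => ln (y + c)) k x.
Proof. intros H. destruct k; [exact I|]. apply Dln; auto. Qed.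
Lemma exinv c k x : 0 < x + c -> ex_derive_n (fun y => / (y + c)) k x.
Proof. intros H. apply Dinv; auto. Qed.

Lemma locln c n x : 0 < x + c ->
  locally x (fun y => forall k, (k <= n)%nat -> ex_derive_n (fun y => ln (y + c)) k y).
Proof. intros H. eapply filter_imp; [|exact (loc_gt (-c) x ltac:(lra))].
  intros y Hy k _. apply exln. lra. Qed.
Lemma locinv c n x : 0 < x + c ->
  locally x (fun y => forall k, (k <= n)%nat -> ex_derive_n (fun y => / (y + c)) k y).
Proof. intros H. eapply filter_imp; [|exact (loc_gt (-c) x ltac:(lra))].
  intros y Hy k _. apply exinv. lra. Qed.
Lemma locscal (f : R -> R) b n x :
  locally x (fun y => forall k, (k <= n)%nat -> ex_derive_n f k y) ->
  locally x (fun y => forall k, (k <= n)%nat -> ex_derive_n (fun z => b * f z) k y).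
Proof. intros H. eapply filter_imp; [|exact H]. intros y Hy k Hk.
  apply ex_derive_n_scal_l. auto. Qed.
Lemma locminus (f g : R -> R) n x :
  locally x (fun y => forall k, (k <= n)%nat -> ex_derive_n f k y) ->
  locally x (fun y => forall k, (k <= n)%nat -> ex_derive_n g k y) ->
  locally x (fun y => forall k, (k <= n)%nat -> ex_derive_n (fun z => f z - g z) k y).
Proof. intros H1 H2. apply locally_locally in H1. apply locally_locally in H2.
  generalize (filter_and _ _ H1 H2). apply filter_imp. intros y [Hy1 Hy2] k Hk.
  apply ex_derive_n_minus.
  - eapply filter_imp; [|exact Hy1]. intros z Hz k0 Hk0. apply Hz; lia.
  - eapply filter_imp; [|exact Hy2]. intros z Hz k0 Hk0. apply Hz; lia. Qed.
Lemma locplus (f g : R -> R) n x :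
  locally x (fun y => forall k, (k <= n)%nat -> ex_derive_n f k y) ->
  locally x (fun y => forall k, (k <= n)%nat -> ex_derive_n g k y) ->
  locally x (fun y => forall k, (k <= n)%nat -> ex_derive_n (fun z => f z + g z) k y).
Proof. intros H1 H2. apply locally_locally in H1. apply locally_locally in H2.
  generalize (filter_and _ _ H1 H2). apply filter_imp. intros y [Hy1 Hy2] k Hk.
  apply ex_derive_n_plus.
  - eapply filter_imp; [|exact Hy1]. intros z Hz k0 Hk0. apply Hz; lia.
  - eapply filter_imp; [|exact Hy2]. intros z Hz k0 Hk0. apply Hz; lia. Qed.

Lemma phi_D a b n x : 0 < x -> 0 < x + a ->
  ex_derive_n (phi a b) n x /\
  Derive_n (phi a b) n x =
    Derive_n (fun y => ln (y + 0)) n x - Derive_n (fun y => ln (y + a)) n x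
    + b * Derive_n (fun y => / (y + 0)) n x + (a - b) * Derive_n (fun y => / (y + a)) n x.
Proof.
  intros H0 Ha. assert (H0' : 0 < x + 0) by lra.
  assert (L1 := locminus _ _ n x (locln 0 n x H0') (locln a n x Ha)).
  assert (L2 := locplus _ _ n x L1 (locscal _ b n x (locinv 0 n x H0'))).
  assert (L3 := locscal _ (a - b) n x (locinv a n x Ha)).
  unfold phi. split.
  - apply ex_derive_n_plus.
    + exact L2.
    + exact L3.
  - rewrite Derive_n_plus; [|exact L2|exact L3].
    rewrite Derive_n_plus; [|exact L1|exact (locscal _ b n x (locinv 0 n x H0'))].
    rewrite Derive_n_minus; [|exact (locln 0 n x H0')|exact (locln a n x Ha)].
    rewrite !Derive_n_scal_l. reflexivity.
Qed.

Lemma m1sq m : (-1) ^ m * (-1) ^ m = 1.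
Proof. rewrite <- Rpow_mult_distr. replace (-1 * -1) with 1 by ring. apply pow1. Qed.

Lemma phi_Sm a b m x : 0 < x -> 0 < x + a ->
  (-1) ^ (S m) * Derive_n (phi a b) (S m) x =
  INR (fact m) * Rn x (x + a) b (S m) / (x ^ (S (S m)) * (x + a) ^ (S (S m))).
Proof.
  intros H0 Ha. rewrite (proj2 (phi_D a b (S m) x H0 Ha)).
  rewrite (proj2 (Dln 0 m x ltac:(lra))), (proj2 (Dln a m x Ha)).
  rewrite (proj2 (Dinv 0 (S m) x ltac:(lra))), (proj2 (Dinv a (S m) x Ha)).
  rewrite Rplus_0_r. unfold Rn.
  assert (T := m1sq m). set (t := (-1) ^ m) in *.
  assert (Ht : t = 1 \/ t = -1) by (destruct (Rle_lt_dec 0 t); [left|right]; nra).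
  rewrite fact_simpl, mult_INR, S_INR. simpl pow. fold t.
  assert (0 < x ^ m) by (apply pow_lt; lra).
  assert (0 < (x + a) ^ m) by (apply pow_lt; lra).
  destruct Ht as [Ht|Ht]; rewrite Ht; field; repeat split; lra.
Qed.

Lemma psi_CM a b s a0 :
  (forall x, a0 < x -> 0 < x /\ 0 < x + a) ->
  (forall x, a0 < x -> 0 <= s * phi a b x) ->
  (forall x m, a0 < x -> 0 <= s * Rn x (x + a) b (S m)) ->
  forall n, CMn (fun y => s * phi a b y) a0 n.
Proof.
  intros Hd H0 HR n k x Hk Hx. destruct (Hd x Hx) as [Hx0 Hxa]. split.
  - apply ex_derive_n_scal_l. apply phi_D; auto.
  - rewrite Derive_n_scal_l. destruct k.
    + simpl. rewrite Rmult_1_l. apply H0. auto.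
    + replace ((-1) ^ S k * (s * Derive_n (phi a b) (S k) x))
        with (s * ((-1) ^ S k * Derive_n (phi a b) (S k) x)) by ring.
      rewrite phi_Sm; auto.
      assert (0 < x ^ (S (S k)) * (x + a) ^ (S (S k))).
      { apply Rmult_lt_0_compat; apply pow_lt; lra. }
      assert (0 < INR (fact k)) by (apply lt_0_INR; apply lt_O_fact).
      unfold Rdiv. specialize (HR x k Hx).
      assert (0 <= / (x ^ S (S k) * (x + a) ^ S (S k))) by (left; apply Rinv_0_lt_compat; auto).
      replace (s * (INR (fact k) * Rn x (x + a) b (S k) * / (x ^ S (S k) * (x + a) ^ S (S k))))
        with (INR (fact k) * (s * Rn x (x + a) b (S k)) * / (x ^ S (S k) * (x + a) ^ S (S k))) by ring.
      apply Rmult_le_pos; auto. apply Rmult_le_pos; lra.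
Qed.

Lemma mono_m1 (f df : R -> R) :
  (forall x, -1 < x -> is_derive f x (df x)) -> (forall x, -1 < x -> 0 <= df x) ->
  forall u v, -1 < u -> u <= v -> f u <= f v.
Proof.
  intros D P u v Hu Huv. destruct (MVT_gen f u v df) as [c [Hc E]].
  - intros x Hx. apply D. rewrite Rmin_left in Hx; lra.
  - intros x Hx. rewrite Rmin_left in Hx by lra. apply continuity_pt_filterlim.
    apply (ex_derive_continuous (K:=R_AbsRing) (V:=R_NormedModule)). eexists. apply D. lra.
  - rewrite Rmin_left in Hc by lra. assert (0 <= df c) by (apply P; lra). nra.
Qed.

Lemma LN1 u : -1 < u -> ln (1 + u) <= u.
Proof. intros H. apply Rle_trans with (ln (exp u)); [|rewrite ln_exp; lra]. apply ln_le; [lra|apply exp_ineq1_le]. Qed.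

Lemma LN2 u : -1 < u -> u / (1 + u) <= ln (1 + u).
Proof. intros H. assert (K := LN1 (- u / (1 + u)) ltac:(apply Rlt_gt in H; 
  unfold Rdiv; assert (0 < / (1+u)) by (apply Rinv_0_lt_compat; lra);
  replace (- u * / (1 + u)) with (-1 + / (1+u)) by (field; lra); lra)).
  replace (1 + - u / (1 + u)) with (/ (1 + u)) in K by (field; lra).
  rewrite ln_Rinv in K by lra. unfold Rdiv in *. lra. Qed.

Definition g3 u := u * (2 + u) / (2 * (1 + u)) - ln (1 + u).
Definition g4 u := ln (1 + u) - 2 * u / (2 + u).

Lemma g3_mono u v : -1 < u -> u <= v -> g3 u <= g3 v.
Proof.
  apply mono_m1 with (df := fun u => u ^ 2 / (2 * (1 + u) ^ 2)).
  - intros x Hx. unfold g3. auto_derive; [repeat split; lra|]. field. lra.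
  - intros x Hx. apply Rmult_le_pos; [apply pow2_ge_0|].
    left. apply Rinv_0_lt_compat. nra.
Qed.
Lemma g4_mono u v : -1 < u -> u <= v -> g4 u <= g4 v.
Proof.
  apply mono_m1 with (df := fun u => u ^ 2 / ((1 + u) * (2 + u) ^ 2)).
  - intros x Hx. unfold g4. auto_derive; [repeat split; lra|]. field. lra.
  - intros x Hx. apply Rmult_le_pos; [apply pow2_ge_0|].
    left. apply Rinv_0_lt_compat. apply Rmult_lt_0_compat; nra.
Qed.

Lemma g3_0 : g3 0 = 0. Proof. unfold g3. replace (1 + 0) with 1 by ring. rewrite ln_1. field. Qed.
Lemma g4_0 : g4 0 = 0. Proof. unfold g4. replace (1 + 0) with 1 by ring. rewrite ln_1. field. Qed.

Definition Hh (a b y : R) : R := (y + b) * ln (1 + a / y).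

Lemma H_deriv a b x : 0 < x -> 0 < x + a -> is_derive (Hh a b) x (- phi a b x).
Proof.
  intros H0 Ha. unfold Hh.
  assert (0 < 1 + a / x).
  { replace (1 + a / x) with ((x + a) / x) by (field; lra). apply Rdiv_lt_0_compat; lra. }
  auto_derive; [repeat split; lra|].
  unfold phi. rewrite !Rplus_0_r.
  replace (1 + a * / x) with ((x + a) / x) by (field; lra). rewrite ln_div by lra.
  field. repeat split; lra.
Qed.

Lemma Derive_shift (g : R -> R) c y : Derive (fun z => g z - c) y = Derive g y.
Proof. unfold Derive. f_equal. apply Lim_ext. intros h. f_equal. ring. Qed.

Lemma Derive_n_shift (g : R -> R) c k y : Derive_n (fun z => g z - c) (S k) y = Derive_n g (S k) y.
Proof. rewrite <- !Derive_n_Derive. apply Derive_n_ext. intros; apply Derive_shift. Qed.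

Lemma CMn_shift (g : R -> R) c a0 n : CMn g a0 n -> (forall x, a0 < x -> c <= g x) ->
  CMn (fun z => g z - c) a0 n.
Proof.
  intros Hg Hc k x Hk Hx. destruct k.
  - split; [exact I|]. simpl. specialize (Hc x Hx). lra.
  - destruct (Hg (S k) x Hk Hx) as [H1 H2]. rewrite Derive_n_shift. split; auto.
    destruct k.
    + simpl in *. apply (ex_derive_minus (K:=R_AbsRing) (V:=R_NormedModule) g (fun _ => c)); auto. apply ex_derive_const.
    + simpl in *. eapply ex_derive_ext; [|exact H1]. intros t.
      symmetry. apply (Derive_n_shift g c k t).
Qed.

Lemma cm_of (f : R -> R) a0 : (forall n, CMn f a0 n) -> completely_monotonic f (fun x => a0 < x).
Proof. intros H k x Hx. apply (H k k x (le_n k) Hx). Qed.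
Lemma cm_to (f : R -> R) a0 n : completely_monotonic f (fun x => a0 < x) -> CMn f a0 n.
Proof. intros H k x _ Hx. apply H; auto. Qed.

Lemma main_if a b s a0 c :
  (forall x, a0 < x -> 0 < x /\ 0 < x + a) ->
  (forall x, a0 < x -> 0 <= s * phi a b x) ->
  (forall x m, a0 < x -> 0 <= s * Rn x (x + a) b (S m)) ->
  (forall x, a0 < x -> c <= exp (s * Hh a b x)) ->
  completely_monotonic (fun x => exp (s * Hh a b x) - c) (fun x => a0 < x).
Proof.
  intros Hd H0 HR Hc. apply cm_of. intros n. apply CMn_shift; auto.
  apply (CMn_exp (fun y => s * Hh a b y) (fun y => s * phi a b y)).
  - intros x Hx. destruct (Hd x Hx) as [Hx0 Hxa].
    replace (- (s * phi a b x)) with (s * (- phi a b x)) by ring.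
    apply (is_derive_scal (fun y => Hh a b y)). apply H_deriv; auto.
  - apply psi_CM; auto.
Qed.

Lemma phi_alt a b x : 0 < x -> 0 < x + a ->
  phi a b x = - ln (1 + a / x) + b / x + (a - b) / (x + a).
Proof. intros. unfold phi. rewrite !Rplus_0_r.
  replace (1 + a / x) with ((x + a) / x) by (field; lra). rewrite ln_div by lra.
  unfold Rdiv. ring. Qed.

Lemma cm_ext (f g : R -> R) I : (forall x, f x = g x) ->
  completely_monotonic f I -> completely_monotonic g I.
Proof. intros E Hf k x Hx. destruct (Hf k x Hx) as [H1 H2]. split.
  - eapply ex_derive_n_ext; eauto.
  - rewrite <- (Derive_n_ext f g k x E). auto. Qed.

Lemma deriv_f a b s c x : 0 < x -> 0 < x + a ->
  Derive_n (fun y => exp (s * Hh a b y) - c) 1 x = exp (s * Hh a b x) * (- (s * phi a b x)).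
Proof. intros. simpl. rewrite Derive_shift. apply is_derive_unique.
  replace (exp (s * Hh a b x) * - (s * phi a b x)) with (scal (s * (- phi a b x)) (exp (s * Hh a b x)))
    by (unfold scal; simpl; unfold mult; simpl; ring).
  apply (is_derive_comp exp (fun y => s * Hh a b y)). 
  - apply is_derive_exp.
  - apply (is_derive_scal (fun y => Hh a b y)). apply H_deriv; auto. Qed.

Lemma fail1 a b s c a0 x : a0 < x -> 0 < x -> 0 < x + a -> s * phi a b x < 0 ->
  ~ completely_monotonic (fun y => exp (s * Hh a b y) - c) (fun y => a0 < y).
Proof.
  intros Hx H0 Ha Hp Hc. destruct (Hc 1%nat x Hx) as [_ K].
  rewrite deriv_f in K; auto. assert (E := exp_pos (s * Hh a b x)). simpl in K. nra.
Qed.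

Lemma fail0 a b s c a0 x : a0 < x -> exp (s * Hh a b x) < c ->
  ~ completely_monotonic (fun y => exp (s * Hh a b y) - c) (fun y => a0 < y).
Proof.
  intros Hx Hl Hc. destruct (Hc 0%nat x Hx) as [_ K]. simpl in K. lra.
Qed.

Lemma key_ineq a b x : 0 < x -> 0 < x + a -> a * b < x * (a - 2 * b) ->
  a * (x + b) / (x * (x + a)) * (2 * x + a) < 2 * a * (x * (x + a)) / (x * (x + a)) \/ a = 0 -> True.
Proof. auto. Qed.

Lemma phi_neg_1a a b x : 0 < a -> 0 < x -> a * b < x * (a - 2 * b) -> phi a b x < 0.
Proof.
  intros Ha Hx Hk. rewrite phi_alt by lra.
  assert (G := g4_mono 0 (a / x) ltac:(lra) ltac:(apply Rlt_le, Rdiv_lt_0_compat; lra)).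
  rewrite g4_0 in G. unfold g4 in G.
  assert (E1 : 2 * (a / x) / (2 + a / x) = 2 * a / (2 * x + a)) by (field; lra).
  assert (E2 : b / x + (a - b) / (x + a) = a * (x + b) / (x * (x + a))) by (field; lra).
  assert (K : a * (x + b) / (x * (x + a)) < 2 * a / (2 * x + a)).
  { apply Rminus_gt_0_lt.
    replace (2 * a / (2 * x + a) - a * (x + b) / (x * (x + a)))
      with (a * (x * (a - 2 * b) - a * b) / ((2 * x + a) * (x * (x + a)))) by (field; lra).
    apply Rdiv_lt_0_compat; [nra|]. apply Rmult_lt_0_compat; nra. }
  lra.
Qed.

Lemma phi_pos_2b a b x : a < 0 -> - a < x -> a * b < x * (a - 2 * b) -> 0 < phi a b x.
Proof.
  intros Ha Hx Hk. rewrite phi_alt by lra.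
  assert (-1 < a / x).
  { apply (Rmult_lt_reg_r x); [lra|]. unfold Rdiv. rewrite Rmult_assoc, Rinv_l by lra. lra. }
  assert (a / x <= 0).
  { unfold Rdiv. assert (0 < / x) by (apply Rinv_0_lt_compat; lra). nra. }
  assert (G := g4_mono (a / x) 0 ltac:(lra) ltac:(lra)).
  rewrite g4_0 in G. unfold g4 in G.
  assert (E1 : 2 * (a / x) / (2 + a / x) = 2 * a / (2 * x + a)) by (field; lra).
  assert (E2 : b / x + (a - b) / (x + a) = a * (x + b) / (x * (x + a))) by (field; lra).
  assert (K : 2 * a / (2 * x + a) < a * (x + b) / (x * (x + a))).
  { apply Rminus_gt_0_lt.
    replace (a * (x + b) / (x * (x + a)) - 2 * a / (2 * x + a))
      with ((- a) * (x * (a - 2 * b) - a * b) / ((2 * x + a) * (x * (x + a)))) by (field; lra).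
    apply Rdiv_lt_0_compat; [nra|]. apply Rmult_lt_0_compat; nra. }
  lra.
Qed.

Lemma exp_le_mono x y : x <= y -> exp x <= exp y.
Proof. intros [h|h]; [left; apply exp_increasing; auto|subst; lra]. Qed.

Lemma ln_pos_u u : 0 <= u -> 0 <= ln (1 + u).
Proof. intros. rewrite <- ln_1. apply ln_le; lra. Qed.

Theorem theorem1p3 (alpha beta : R) :
  (0 < alpha ->
     (completely_monotonic (fun x => F alpha beta x - exp alpha) (fun x => 0 < x)
        <-> alpha <= 2 * beta)
     /\
     (completely_monotonic
        (fun x => Rpower (1 + alpha / x) (- (x + beta)) - exp (- alpha))
        (fun x => 0 < x)
        <-> beta <= 0))
  /\
  (alpha < 0 ->
     (completely_monotonic (fun x => F alpha beta x - exp alpha) (fun x => - alpha < x)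
        <-> beta <= alpha)
     /\
     (completely_monotonic (fun x => / F alpha beta x) (fun x => - alpha < x)
        <-> alpha <= 2 * beta)).
Proof.
  assert (EF : forall x, exp (1 * Hh alpha beta x) - exp alpha = F alpha beta x - exp alpha).
  { intros. unfold F, Rpower, Hh. rewrite Rmult_1_l. reflexivity. }
  assert (EF' : forall x, F alpha beta x - exp alpha = exp (1 * Hh alpha beta x) - exp alpha).
  { intros. symmetry. apply EF. }
  assert (EG : forall x, exp (-1 * Hh alpha beta x) - exp (- alpha) =
                         Rpower (1 + alpha / x) (- (x + beta)) - exp (- alpha)).
  { intros. unfold Rpower, Hh. f_equal. f_equal. ring. }
  assert (EG' : forall x, Rpower (1 + alpha / x) (- (x + beta)) - exp (- alpha) =
                          exp (-1 * Hh alpha beta x) - exp (- alpha)).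
  { intros. symmetry. apply EG. }
  assert (EI : forall x, exp (-1 * Hh alpha beta x) - 0 = / F alpha beta x).
  { intros. unfold F, Rpower, Hh. rewrite <- exp_Ropp. rewrite Rminus_0_r. f_equal. ring. }
  assert (EI' : forall x, / F alpha beta x = exp (-1 * Hh alpha beta x) - 0).
  { intros. symmetry. apply EI. }
  split; intros Ha; split; split; intros Hc.
  -
    destruct (Rle_lt_dec alpha (2 * beta)) as [h|h]; auto. exfalso.
    set (x := Rabs (alpha * beta / (alpha - 2 * beta)) + 1).
    assert (Hx : 0 < x) by (unfold x; pose proof (Rabs_pos (alpha * beta / (alpha - 2 * beta))); lra).
    assert (Hk : alpha * beta < x * (alpha - 2 * beta)).
    { assert (alpha * beta / (alpha - 2 * beta) < x).
      { unfold x. pose proof (Rle_abs (alpha * beta / (alpha - 2 * beta))). lra. }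
      apply (Rmult_lt_compat_r (alpha - 2 * beta)) in H; [|lra].
      unfold Rdiv in H. rewrite Rmult_assoc, Rinv_l in H by lra. lra. }
    apply (fail1 alpha beta 1 (exp alpha) 0 x Hx Hx ltac:(lra)).
    + rewrite Rmult_1_l. apply phi_neg_1a; auto.
    + eapply cm_ext; [exact EF'|exact Hc].
  -
    eapply cm_ext; [exact EF|]. apply main_if.
    + intros; lra.
    + intros x Hx. rewrite Rmult_1_l. rewrite phi_alt by lra.
      assert (G := g3_mono 0 (alpha / x) ltac:(lra) ltac:(apply Rlt_le, Rdiv_lt_0_compat; lra)).
      rewrite g3_0 in G. unfold g3 in G.
      assert (E1 : alpha / x * (2 + alpha / x) / (2 * (1 + alpha / x)) = alpha / (2 * x) + alpha / (2 * (x + alpha))) by (field; lra).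
      assert (E2 : beta / x + (alpha - beta) / (x + alpha) - (alpha / (2 * x) + alpha / (2 * (x + alpha)))
                   = (beta - alpha / 2) * (alpha / (x * (x + alpha)))) by (field; lra).
      assert (0 <= (beta - alpha / 2) * (alpha / (x * (x + alpha)))).
      { apply Rmult_le_pos; [lra|]. left. apply Rdiv_lt_0_compat; nra. }
      lra.
    + intros x m Hx. rewrite Rmult_1_l, Rn_Bn.
      apply Rmult_le_pos; [lra|]. apply Bn_ge; lra.
    + intros x Hx. rewrite Rmult_1_l. apply exp_le_mono. unfold Hh.
      assert (G := g4_mono 0 (alpha / x) ltac:(lra) ltac:(apply Rlt_le, Rdiv_lt_0_compat; lra)).
      rewrite g4_0 in G. unfold g4 in G.
      assert (E1 : 2 * (alpha / x) / (2 + alpha / x) = 2 * alpha / (2 * x + alpha)) by (field; lra).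
      assert (E2 : (x + alpha / 2) * (2 * alpha / (2 * x + alpha)) = alpha) by (field; lra).
      assert (L0 := ln_pos_u (alpha / x) ltac:(apply Rlt_le, Rdiv_lt_0_compat; lra)).
      set (L := ln (1 + alpha / x)) in *.
      assert (K1 : (x + alpha / 2) * (2 * alpha / (2 * x + alpha)) <= (x + alpha / 2) * L).
      { apply Rmult_le_compat_l; lra. }
      assert (K2 : 0 <= (beta - alpha / 2) * L) by (apply Rmult_le_pos; lra).
      nra.
  -
    destruct (Rle_lt_dec beta 0) as [h|h]; auto. exfalso.
    set (M := alpha / beta + 1).
    assert (HM : 0 < M).
    { unfold M. assert (0 < alpha / beta) by (apply Rdiv_lt_0_compat; lra). lra. }
    assert (HeM := exp_increasing 0 M HM). rewrite exp_0 in HeM.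
    set (x := alpha / (exp M - 1)).
    assert (Hx : 0 < x) by (apply Rdiv_lt_0_compat; lra).
    assert (Eu : 1 + alpha / x = exp M) by (unfold x; field; lra).
    apply (fail0 alpha beta (-1) (exp (- alpha)) 0 x Hx).
    + apply exp_increasing. unfold Hh. rewrite Eu, ln_exp.
      assert (beta * M = alpha + beta) by (unfold M; field; lra).
      assert (0 < x * M) by (apply Rmult_lt_0_compat; lra). nra.
    + eapply cm_ext; [exact EG'|exact Hc].
  -
    eapply cm_ext; [exact EG|]. apply main_if.
    + intros; lra.
    + intros x Hx. rewrite phi_alt by lra.
      assert (G := LN2 (alpha / x) ltac:(assert (0 < alpha / x) by (apply Rdiv_lt_0_compat; lra); lra)).
      assert (E1 : alpha / x / (1 + alpha / x) = alpha / (x + alpha)) by (field; lra).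
      assert (E2 : beta / x + (alpha - beta) / (x + alpha) = alpha / (x + alpha) + beta * (alpha / (x * (x + alpha)))) by (field; lra).
      assert (0 <= alpha / (x * (x + alpha))) by (left; apply Rdiv_lt_0_compat; nra).
      assert (beta * (alpha / (x * (x + alpha))) <= 0) by nra.
      lra.
    + intros x m Hx. rewrite Rn_Bn.
      assert (Bn x (x + alpha) beta (S m) <= 0) by (apply Bn_le; lra).
      replace (x + alpha - x) with alpha by ring. nra.
    + intros x Hx. apply exp_le_mono. unfold Hh.
      assert (Hu : 0 < alpha / x) by (apply Rdiv_lt_0_compat; lra).
      assert (L0 := ln_pos_u (alpha / x) ltac:(lra)).
      assert (L1 := LN1 (alpha / x) ltac:(lra)).
      set (L := ln (1 + alpha / x)) in *.
      assert (x * (alpha / x) = alpha) by (field; lra).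
      assert (x * L <= x * (alpha / x)) by (apply Rmult_le_compat_l; lra).
      nra.
  -
    destruct (Rle_lt_dec beta alpha) as [h|h]; auto. exfalso.
    set (M := - alpha / (beta - alpha) + 1).
    assert (HM0 : 0 < - alpha / (beta - alpha)) by (apply Rdiv_lt_0_compat; lra).
    assert (HM : 0 < M) by (unfold M; lra).
    assert (He := exp_increasing (- M) 0 ltac:(lra)). rewrite exp_0 in He.
    assert (He0 := exp_pos (- M)).
    set (e := exp (- M)) in *.
    set (x := - alpha / (1 - e)).
    assert (Hx : - alpha < x).
    { unfold x. apply (Rmult_lt_reg_r (1 - e)); [lra|].
      unfold Rdiv. rewrite Rmult_assoc, Rinv_l by lra. nra. }
    assert (Eu : 1 + alpha / x = e) by (unfold x; field; split; lra).
    apply (fail0 alpha beta 1 (exp alpha) (- alpha) x Hx).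
    + apply exp_increasing. unfold Hh. rewrite Eu. unfold e. rewrite ln_exp.
      assert (M * (beta - alpha) = - alpha + (beta - alpha)) by (unfold M; field; lra).
      assert ((beta - alpha) * M <= (x + beta) * M) by (apply Rmult_le_compat_r; lra).
      nra.
    + eapply cm_ext; [exact EF'|exact Hc].
  -
    eapply cm_ext; [exact EF|]. apply main_if.
    + intros; lra.
    + intros x Hx. rewrite Rmult_1_l. rewrite phi_alt by lra.
      assert (Hu : -1 < alpha / x).
      { apply (Rmult_lt_reg_r x); [lra|]. unfold Rdiv. rewrite Rmult_assoc, Rinv_l by lra. lra. }
      assert (G := LN1 (alpha / x) Hu).
      assert (E2 : beta / x + (alpha - beta) / (x + alpha) - alpha / x = (beta - alpha) * (alpha / (x * (x + alpha)))) by (field; lra).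
      assert (alpha / (x * (x + alpha)) <= 0).
      { unfold Rdiv. assert (0 < / (x * (x + alpha))) by (apply Rinv_0_lt_compat; nra). nra. }
      assert (0 <= (beta - alpha) * (alpha / (x * (x + alpha)))) by nra.
      lra.
    + intros x m Hx. rewrite Rmult_1_l, Rn_Bn.
      assert (Bn x (x + alpha) beta (S m) <= 0) by (apply Bn_le; lra).
      replace (x + alpha - x) with alpha by ring. nra.
    + intros x Hx. rewrite Rmult_1_l. apply exp_le_mono. unfold Hh.
      assert (Hu : -1 < alpha / x).
      { apply (Rmult_lt_reg_r x); [lra|]. unfold Rdiv. rewrite Rmult_assoc, Rinv_l by lra. lra. }
      assert (L1 := LN1 (alpha / x) Hu).
      assert (L2 := LN2 (alpha / x) Hu).
      assert (E1 : alpha / x / (1 + alpha / x) = alpha / (x + alpha)) by (field; lra).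
      assert (Hu0 : alpha / x < 0).
      { unfold Rdiv. assert (0 < / x) by (apply Rinv_0_lt_compat; lra). nra. }
      set (L := ln (1 + alpha / x)) in *.
      assert (E3 : (x + alpha) * (alpha / (x + alpha)) = alpha) by (field; lra).
      assert ((x + alpha) * (alpha / (x + alpha)) <= (x + alpha) * L) by (apply Rmult_le_compat_l; lra).
      nra.
  -
    destruct (Rle_lt_dec alpha (2 * beta)) as [h|h]; auto. exfalso.
    set (x := Rabs (alpha * beta / (alpha - 2 * beta)) - alpha + 1).
    assert (Hx : - alpha < x) by (unfold x; pose proof (Rabs_pos (alpha * beta / (alpha - 2 * beta))); lra).
    assert (Hk : alpha * beta < x * (alpha - 2 * beta)).
    { assert (alpha * beta / (alpha - 2 * beta) < x).
      { unfold x. pose proof (Rle_abs (alpha * beta / (alpha - 2 * beta))). lra. }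
      apply (Rmult_lt_compat_r (alpha - 2 * beta)) in H; [|lra].
      unfold Rdiv in H. rewrite Rmult_assoc, Rinv_l in H by lra. lra. }
    apply (fail1 alpha beta (-1) 0 (- alpha) x Hx ltac:(lra) ltac:(lra)).
    + assert (0 < phi alpha beta x) by (apply phi_pos_2b; auto). lra.
    + eapply cm_ext; [exact EI'|exact Hc].
  -
    eapply cm_ext; [exact EI|]. apply main_if.
    + intros; lra.
    + intros x Hx. rewrite phi_alt by lra.
      assert (Hu : -1 < alpha / x).
      { apply (Rmult_lt_reg_r x); [lra|]. unfold Rdiv. rewrite Rmult_assoc, Rinv_l by lra. lra. }
      assert (Hu0 : alpha / x < 0).
      { unfold Rdiv. assert (0 < / x) by (apply Rinv_0_lt_compat; lra). nra. }
      assert (G := g3_mono (alpha / x) 0 Hu ltac:(lra)).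
      rewrite g3_0 in G. unfold g3 in G.
      assert (E1 : alpha / x * (2 + alpha / x) / (2 * (1 + alpha / x)) = alpha / (2 * x) + alpha / (2 * (x + alpha))) by (field; lra).
      assert (E2 : beta / x + (alpha - beta) / (x + alpha) - (alpha / (2 * x) + alpha / (2 * (x + alpha)))
                   = (beta - alpha / 2) * (alpha / (x * (x + alpha)))) by (field; lra).
      assert (alpha / (x * (x + alpha)) <= 0).
      { unfold Rdiv. assert (0 < / (x * (x + alpha))) by (apply Rinv_0_lt_compat; nra). nra. }
      assert ((beta - alpha / 2) * (alpha / (x * (x + alpha))) <= 0) by nra.
      lra.
    + intros x m Hx. rewrite Rn_Bn.
      assert (0 <= Bn x (x + alpha) beta (S m)) by (apply Bn_ge; lra).
      replace (x + alpha - x) with alpha by ring. nra.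
    + intros x Hx. left. apply exp_pos.
Qed.
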